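(* Let $A$ be an $n\times n$ Hermitian matrix. For all integers $1\le k\le m\le n$, $$\underbrace{X_m(A)\cup\dots\cup X_m(A)}_{\binom{m-1}{k-1}\text{ times}}\;\succ\;\underbrace{X_k(A)\cup\dots\cup X_k(A)}_{\binom{n-k}{m-k}\text{ times}}.$$
   Context: For $1\le m\le n$, $X_m(A)$ is the real vector (of length $m\binom nm$) listing the eigenvalues, with multiplicity, of all $\binom nm$ principal $m\times m$ submatrices of $A$. The symbol $\cup$ denotes concatenation of vectors. For $x\in\mathbb R^N$, $x^{\downarrow}$ is the non-increasing rearrangement of $x$; for $x,y\in\mathbb R^N$, $x\succ y$ means $\sum_{i=1}^k x^{\downarrow}_i\ge\sum_{i=1}^k y^{\downarrow}_i$ for all $k=1,\dots,N$ with equality for $k=N$ (majorization is invariant under reordering the entries). *)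

(* Defs.v *)
From HB Require Import structures.
From mathcomp Require Import all_boot all_order all_algebra.
From mathcomp Require Import complex.
Set Implicit Arguments. Unset Strict Implicit. Unset Printing Implicit Defensive.
Import Order.TTheory GRing.Theory Num.Theory.
Local Open Scope ring_scope.

Definition is_hermitian (R : rcfType) (n : nat) (A : 'M[R[i]]_n) : Prop :=
  forall i j, A i j = conjc (A j i).

Lemma char_poly_splits (R : rcfType) (k : nat) (M : 'M[R[i]]_k) :
  exists s : seq R[i], char_poly M == \prod_(z <- s) ('X - z%:P).
Proof.
have [s Hs] := closed_field_poly_normal (char_poly M).
by exists s; apply/eqP; rewrite {1}Hs (monicP (char_poly_monic M)) scale1r.
Qed.

(* The eigenvalues of M, listed with (algebraic) multiplicity: the roots of the
   characteristic polynomial.  The order is an arbitrary (fixed) choice. *)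
Definition eigs (R : rcfType) (k : nat) (M : 'M[R[i]]_k) : seq R[i] :=
  xchoose (char_poly_splits M).

Definition psubmx (T : Type) (n : nat) (A : 'M[T]_n) (S : {set 'I_n}) : 'M[T]_#|S| :=
  \matrix_(i < #|S|, j < #|S|) A (enum_val i) (enum_val j).

(* X_m(A): eigenvalues (real parts; they are real since A is Hermitian) of all
   principal m x m submatrices of A, concatenated. *)
Definition Xm (R : rcfType) (n : nat) (A : 'M[R[i]]_n) (m : nat) : seq R :=
  flatten [seq map (fun z : R[i] => complex.Re z) (eigs (psubmx A J)) | J <- enum [set J : {set 'I_n} | #|J| == m]].

Definition rep (T : Type) (c : nat) (x : seq T) : seq T := flatten (nseq c x).

Definition topsum (R : realDomainType) (k : nat) (x : seq R) : R :=
  \sum_(a <- take k (sort (fun a b : R => b <= a) x)) a.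

Definition majorizes (R : realDomainType) (x y : seq R) : Prop :=
  size x = size y /\
  (forall k, (1 <= k <= size x)%N -> topsum k y <= topsum k x) /\
  topsum (size x) x = topsum (size x) y.

(* Main.v *)
Require Import Defs.
From HB Require Import structures.
From mathcomp Require Import all_boot all_order all_algebra.
From mathcomp Require Import complex.
From mathcomp Require Import zify ring lra.
Set Implicit Arguments. Unset Strict Implicit. Unset Printing Implicit Defensive.
Import Order.TTheory GRing.Theory Num.Theory.

Section PartA.

Lemma card_bij (T U : finType) (A : {set T}) (B : {set U}) (f : T -> U) (g : U -> T) :
  {in A, forall x, f x \in B} -> {in B, forall y, g y \in A} ->
  {in A, cancel f g} -> {in B, cancel g f} -> #|A| = #|B|.
Proof.
move=> fA gB fK gK; apply/eqP; rewrite eqn_leq; apply/andP; split.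
  rewrite -(@card_in_imset _ _ f A); last first.
    by move=> x y xA yA e; rewrite -(fK x xA) e fK.
  by apply: subset_leq_card; apply/subsetP => y /imsetP [x xA ->]; exact: fA.
rewrite -(@card_in_imset _ _ g B); last first.
  by move=> x y xA yA e; rewrite -(gK x xA) e gK.
by apply: subset_leq_card; apply/subsetP => y /imsetP [x xA ->]; exact: gB.
Qed.

Lemma count_contain (T : finType) (J : {set T}) (x : T) (k : nat) :
  x \in J -> (1 <= k)%N ->
  #|[set K : {set T} | [&& K \subset J, #|K| == k & x \in K]]| = 'C(#|J|.-1, k.-1).
Proof.
move=> xJ k1.
have -> : #|J|.-1 = #|J :\ x| by rewrite (cardsD1 x J) xJ.
rewrite -cards_draws.
apply: (@card_bij _ _ _ _ (fun K => K :\ x) (fun L => x |: L)).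
- move=> K; rewrite !inE => /and3P [KJ /eqP cK xK].
  rewrite setSD //= -cK (cardsD1 x K) xK.
  by [].
- move=> L; rewrite !inE => /andP [LJ /eqP cL].
  have xL : x \notin L by apply/negP => /(subsetP LJ); rewrite !inE eqxx.
  rewrite cardsU1 xL cL /= add1n prednK //; apply/and3P; split => //; last by rewrite eqxx.
  idtac.
  apply/subsetP => y; rewrite !inE => /orP [/eqP -> //| yL].
  by move: (subsetP LJ y yL); rewrite !inE => /andP [].
- by move=> K; rewrite !inE => /and3P [_ _ xK]; rewrite setD1K.
- move=> L; rewrite !inE => /andP [LJ _].
  have xL : x \notin L by apply/negP => /(subsetP LJ); rewrite !inE eqxx.
  by rewrite setU1K.
Qed.

Lemma count_super (T : finType) (K : {set T}) (m : nat) :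
  (#|K| <= m)%N ->
  #|[set J : {set T} | (#|J| == m) && (K \subset J)]| = 'C(#|T| - #|K|, m - #|K|).
Proof.
move=> km.
have -> : (#|T| - #|K| = #|~: K|)%N by rewrite [X in (_ - X)%N]cardsCs subKn // max_card.

rewrite -cards_draws.
apply: (@card_bij _ _ _ _ (fun J => J :\: K) (fun L => K :|: L)).
- move=> J; rewrite !inE => /andP [/eqP cJ KJ].
  rewrite setDE subsetIr /= -setDE cardsD (setIidPr KJ) cJ.
  by [].
- move=> L; rewrite !inE => /andP [LK /eqP cL].
  rewrite subsetUl andbT cardsU.
  have -> : K :&: L = set0.
    apply/setP => y; rewrite !inE; apply/negP => /andP [yK yL].
    by move: (subsetP LK y yL); rewrite !inE yK.
  by rewrite cards0 subn0 cL subnKC.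
- by move=> J; rewrite !inE => /andP [_ KJ]; rewrite -{2}(setID J K) (setIidPr KJ).
- move=> L; rewrite !inE => /andP [LK _].
  rewrite setDUl setDv set0U; apply/setDidPl.
  by rewrite disjoints_subset.
Qed.

End PartA.

Local Open Scope ring_scope.

Section Maj.
Variable R : realDomainType.
Local Notation pos r a := (Num.max (a - r) 0 : R).

Lemma sum_const_seq (T : Type) (s : seq T) (c : R) : \sum_(a <- s) c = c *+ size s.
Proof. by elim: s => [|a s IH]; rewrite ?big_nil ?big_cons ?IH ?mulrS. Qed.

Lemma pos_ge0 r a : 0 <= pos r a.
Proof. by rewrite le_max lexx orbT. Qed.

Lemma ge_total : total (fun a b : R => b <= a).
Proof. by move=> a b; rewrite orbC le_total. Qed.

Lemma ge_trans : transitive (fun a b : R => b <= a).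
Proof. by move=> a b c h1 h2; exact: le_trans h2 h1. Qed.

Lemma topsum_le_r (x : seq R) t r : (t <= size x)%N ->
  topsum t x <= t%:R * r + \sum_(a <- x) pos r a.
Proof.
move=> tx; rewrite /topsum; set s := sort _ x.
have ps : perm_eq s x by rewrite perm_sort.
have ss : size s = size x by rewrite size_sort.
rewrite -(perm_big _ ps) -[s in X in _ <= _ + X](cat_take_drop t s) big_cat /=.
have hd : 0 <= \sum_(a <- drop t s) pos r a by apply: sumr_ge0 => a _; exact: pos_ge0.
apply: (@le_trans _ _ (t%:R * r + \sum_(a <- take t s) pos r a)); last first.
  by rewrite addrA lerDl.
have -> : t%:R * r = \sum_(a <- take t s) r.
  by rewrite sum_const_seq size_takel ?ss // mulr_natl.
rewrite -big_split /=; apply: ler_sum => a _.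
by rewrite -lerBlDl le_max lexx.
Qed.

Lemma topsum_eq_r (x : seq R) t : (1 <= t)%N -> (t <= size x)%N ->
  exists r, topsum t x = t%:R * r + \sum_(a <- x) pos r a.
Proof.
move=> t1 tx; rewrite /topsum; set s := sort _ x.
have ps : perm_eq s x by rewrite perm_sort.
have ss : size s = size x by rewrite size_sort.
have so : sorted (fun a b : R => b <= a) s by apply: sort_sorted; exact: ge_total.
have hnth := sorted_leq_nth ge_trans (fun a : R => lexx a) 0 so.
exists (nth 0 s t.-1); set r0 := nth 0 s t.-1.
rewrite -(perm_big _ ps) -{2}(cat_take_drop t s) big_cat /=.
have -> : \sum_(a <- drop t s) pos r0 a = 0.
  rewrite (big_nth 0) big1_seq // => i /andP [_]; rewrite mem_index_iota => /andP [_ hi].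
  rewrite size_drop in hi; rewrite nth_drop.
  apply/eqP; rewrite eq_le pos_ge0 andbT ge_max lexx andbT subr_le0.
  rewrite /r0; apply: hnth; rewrite ?inE ?ss; rewrite ss in hi; lia.
rewrite addr0.
have -> : \sum_(a <- take t s) pos r0 a = \sum_(a <- take t s) (a - r0).
  rewrite (big_nth 0) [RHS](big_nth 0) size_takel ?ss //.
  rewrite !big_nat; apply: eq_bigr => i /andP [_ hi]; rewrite nth_take //.
  apply/max_idPl; rewrite subr_ge0; apply: hnth; rewrite ?inE ?ss; lia.
rewrite sumrB sum_const_seq size_takel ?ss // mulr_natl.
by rewrite addrC subrK.
Qed.

Lemma topsum_all (x : seq R) : topsum (size x) x = \sum_(a <- x) a.
Proof.
rewrite /topsum -(size_sort (fun a b : R => b <= a)) take_size.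
by apply: perm_big; rewrite perm_sort.
Qed.

Lemma majorizes_of (x y : seq R) : size x = size y ->
  \sum_(a <- x) a = \sum_(a <- y) a ->
  (forall r, \sum_(a <- y) pos r a <= \sum_(a <- x) pos r a) ->
  majorizes x y.
Proof.
move=> sz sm hr; split => //; split.
  move=> t /andP [t1 tx]; have [r ->] := topsum_eq_r t1 tx.
  apply: le_trans (topsum_le_r r _) _; first by rewrite -sz.
  by rewrite lerD2l.
by rewrite topsum_all {1}sz topsum_all.
Qed.
End Maj.

Local Open Scope sesquilinear_scope.

Lemma char_poly_conj (F : fieldType) q (P D : 'M[F]_q) : P \in unitmx ->
  char_poly (invmx P *m D *m P) = char_poly D.
Proof.
move=> Pu; rewrite /char_poly /char_poly_mx !map_mxM.
set iP := map_mx _ (invmx P); set P' := map_mx _ P; set D' := map_mx _ D.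
have h1 : iP *m P' = 1%:M by rewrite -map_mxM mulVmx // map_mx1.
have -> : ('X%:M : 'M_q) - iP *m D' *m P' = iP *m ('X%:M - D') *m P'.
  by rewrite mulmxBr mulmxBl mul_mx_scalar -scalemxAl h1 scalemx1.
by rewrite !det_mulmx mulrAC -det_mulmx h1 det1 mul1r.
Qed.

Section Core.
Variable R : rcfType.
Local Notation C := (R[i]).
Local Notation re := (@complex.Re R).
Definition cR (r : R) : C := Complex r 0.
Local Notation pos r a := (Num.max (a - r) 0 : R).

Lemma reD (x y : C) : re (x + y) = re x + re y. Proof. by case: x; case: y. Qed.
Lemma reN (x : C) : re (- x) = - re x. Proof. by case: x. Qed.
Lemma reB (x y : C) : re (x - y) = re x - re y. Proof. by rewrite reD reN. Qed.
Lemma re_sum (I : Type) (s : seq I) (P : pred I) (F : I -> C) :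
  re (\sum_(i <- s | P i) F i) = \sum_(i <- s | P i) re (F i).
Proof. exact: (big_morph re reD (erefl (re 0))). Qed.
Lemma re_cRM a (y : C) : re (cR a * y) = a * re y.
Proof. by case: y => c d /=; rewrite mul0r subr0. Qed.
Lemma re_cR a : re (cR a) = a. Proof. by []. Qed.
Lemma cRB a b : cR (a - b) = cR a - cR b.
Proof. by rewrite /cR /=; congr Complex; rewrite oppr0 addr0. Qed.
Lemma cR_nat (n : nat) : (n%:R : C) = cR n%:R.
Proof.
elim: n => [//|n IH]; rewrite -addn1 !natrD IH /cR /=.
by congr Complex; rewrite addr0.
Qed.
Lemma re_conjM (z : C) : re (z * z^*) = re z ^+ 2 + complex.Im z ^+ 2.
Proof. by case: z => a b /=; ring. Qed.
Lemma re_conjM_ge0 (z : C) : 0 <= re (z * z^*).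
Proof. by rewrite re_conjM addr_ge0 // sqr_ge0. Qed.

Lemma herm_sym q (M : 'M[C]_q) : is_hermitian M -> M \is hermsymmx.
Proof.
move=> hM; apply/is_hermitianmxP; rewrite expr0 scale1r.
by apply/matrixP => i j; rewrite !mxE hM.
Qed.

Lemma entry_mul3 p q (A : 'M[C]_(p, q)) (B : 'M[C]_q) (D : 'M[C]_(q, p)) i j :
  (A *m B *m D) i j = (row i A *m B *m col j D) 0 0.
Proof.
rewrite !mxE; apply: eq_bigr => k _; rewrite !mxE; congr (_ * _).
by apply: eq_bigr => l _; rewrite !mxE.
Qed.

Lemma entry_mul2 p q (A : 'M[C]_(p, q)) (D : 'M[C]_(q, p)) i j :
  (A *m D) i j = (row i A *m col j D) 0 0.
Proof. by rewrite !mxE; apply: eq_bigr => k _; rewrite !mxE. Qed.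

Lemma col_ct p q (A : 'M[C]_(p, q)) j : col j (A ^t*) = (row j A) ^t*.
Proof. by apply/matrixP => a b; rewrite !mxE. Qed.

Lemma tr_diag_mul q (e : 'rV[C]_q) (W : 'M[C]_q) :
  \tr (diag_mx e *m W) = \sum_i e 0 i * W i i.
Proof. by apply: eq_bigr => i _; rewrite mul_diag_mx mxE. Qed.

Lemma quad_diag q (w : 'rV[C]_q) (e : 'rV[C]_q) :
  (w *m diag_mx e *m w ^t*) 0 0 = \sum_j e 0 j * (w 0 j * (w 0 j)^*).
Proof.
rewrite mxE; apply: eq_bigr => j _; rewrite mul_mx_diag !mxE.
by rewrite mulrCA mulrA.
Qed.

Lemma quad1 q (w : 'rV[C]_q) : (w *m w ^t*) 0 0 = \sum_j w 0 j * (w 0 j)^*.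
Proof. by rewrite mxE; apply: eq_bigr => j _; rewrite !mxE. Qed.

Lemma ct_mul p q s (A : 'M[C]_(p, q)) (B : 'M[C]_(q, s)) : (A *m B) ^t* = B ^t* *m A ^t*.
Proof. by rewrite trmx_mul map_mxM. Qed.

Lemma spec q (M : 'M[C]_q) : is_hermitian M ->
  let U := spectralmx M in let sp := spectral_diag M in
  [/\ U *m U ^t* = 1%:M, U ^t* *m U = 1%:M, M = U ^t* *m diag_mx sp *m U,
      (forall i, sp 0 i = cR (re (sp 0 i))) &
      perm_eq (eigs M) [seq sp 0 i | i <- enum 'I_q]].
Proof.
move=> hM U sp.
have Uu : U \is unitarymx by exact: spectral_unitarymx.
have uU1 : U *m U ^t* = 1%:M by apply/unitarymxP.
have iU : invmx U = U ^t* by rewrite invmx_unitary.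
have uU2 : U ^t* *m U = 1%:M by rewrite -iU mulVmx // unitarymx_unit.
have ME : M = U ^t* *m diag_mx sp *m U.
  rewrite -iU; apply/orthomx_spectralP; apply: hermitian_normalmx; exact: herm_sym.
split => //.
  move=> i; have := hermitian_spectral_diag_real (herm_sym hM).
  move=> /mxOverP /(_ 0 i) /RRe_real <-; by [].
rewrite /eigs; have /eqP := xchooseP (char_poly_splits M).
rewrite {1}ME -iU char_poly_conj ?unitarymx_unit // char_poly_trig ?diag_mx_is_trig //.
move=> h; apply: prod_XsubC_eq; rewrite -h big_map big_enum /=.
by apply: eq_bigr => i _; rewrite mxE eqxx mulr1n.
Qed.

Lemma size_eigs q (M : 'M[C]_q) : size (eigs M) = q.
Proof.
have h := f_equal (fun p : {poly C} => size p) (eqP (xchooseP (char_poly_splits M))).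
by move: h; rewrite size_char_poly size_prod_XsubC => -[].
Qed.

Lemma sum_eigs_tr q (M : 'M[C]_q) : is_hermitian M ->
  \sum_(z <- eigs M) re z = re (\tr M).
Proof.
move=> hM; have [uU1 uU2 ME spR pe] := spec hM.
rewrite (perm_big _ pe) big_map big_enum /= {2}ME mxtrace_mulC mulmxA uU1 mul1mx.
rewrite mxtrace_diag re_sum; by [].
Qed.

Lemma shift_diag q (M : 'M[C]_q) (U : 'M[C]_q) (sp : 'rV[C]_q) (s : C) :
  U ^t* *m U = 1%:M -> M = U ^t* *m diag_mx sp *m U ->
  M - s%:M = U ^t* *m diag_mx (\row_i (sp 0 i - s)) *m U.
Proof.
move=> uU2 ->.
have -> : diag_mx (\row_i (sp 0 i - s)) = diag_mx sp - s%:M.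
  by apply/matrixP => i j; rewrite !mxE mulrnBl.
by rewrite mulmxBr mulmxBl mul_mx_scalar -scalemxAl uU2 scalemx1.
Qed.

Lemma trace_bound q (M Q : 'M[C]_q) (c r : R) : is_hermitian M ->
  (forall v : 'rV[C]_q, 0 <= re ((v *m Q *m v ^t*) 0 0) <= c * re ((v *m v ^t*) 0 0)) ->
  re (\tr ((M - (cR r)%:M) *m Q)) <= c * \sum_(z <- eigs M) pos r (re z).
Proof.
move=> hM hQ; have [uU1 uU2 ME spR pe] := spec hM.
set U := spectralmx M in uU1 uU2 ME pe *; set sp := spectral_diag M in ME spR pe *.
rewrite (perm_big _ pe) big_map big_enum /= mulr_sumr.
rewrite (shift_diag (cR r) uU2 ME) -!mulmxA mxtrace_mulC -!mulmxA tr_diag_mul re_sum.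
apply: ler_sum => i _; rewrite mxE spR -cRB re_cRM.
have := hQ (row i U); rewrite -col_ct -entry_mul3 -entry_mul2 uU1 mulmxA re_cR.
have e1 : (1%:M : 'M[C]_q) i i = 1 by rewrite mxE eqxx.
rewrite e1 /=.
set t := re _; set d := re (sp 0 i) - r => /andP [t0 tc].
rewrite mulr1 in tc.
case: (leP 0 d) => hd.
  by nra.
by rewrite mulr0; nra.
Qed.

Definition optQ q (M : 'M[C]_q) (r : R) : 'M[C]_q :=
  (spectralmx M) ^t* *m diag_mx (\row_i cR (nat_of_bool (r < re (spectral_diag M 0 i))%R)%:R)
     *m spectralmx M.

Lemma optQ_bound q (M : 'M[C]_q) r (v : 'rV[C]_q) :
  0 <= re ((v *m optQ M r *m v ^t*) 0 0) <= re ((v *m v ^t*) 0 0).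
Proof.
set U := spectralmx M.
have Uu : U \is unitarymx by exact: spectral_unitarymx.
have iU : invmx U = U ^t* by rewrite invmx_unitary.
have uU2 : U ^t* *m U = 1%:M by rewrite -iU mulVmx // unitarymx_unit.
have -> : v *m optQ M r *m v ^t* = (v *m U ^t*) *m diag_mx (\row_i cR (nat_of_bool (r < re (spectral_diag M 0 i))%R)%:R) *m (v *m U ^t*) ^t*.
  by rewrite ct_mul trmxCK /optQ -/U !mulmxA.
have -> : v *m v ^t* = (v *m U ^t*) *m (v *m U ^t*) ^t*.
  by rewrite ct_mul trmxCK -!mulmxA [U ^t* *m (U *m _)]mulmxA uU2 mul1mx.
rewrite quad_diag quad1 !re_sum; set w := v *m U ^t*.
apply/andP; split.
  by apply: sumr_ge0 => j _; rewrite mxE re_cRM mulr_ge0 ?ler0n ?re_conjM_ge0.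
apply: ler_sum => j _; rewrite mxE re_cRM.
by case: (r < _); rewrite ?mul1r ?mul0r ?re_conjM_ge0.
Qed.

Lemma optQ_tr q (M : 'M[C]_q) r : is_hermitian M ->
  re (\tr ((M - (cR r)%:M) *m optQ M r)) = \sum_(z <- eigs M) pos r (re z).
Proof.
move=> hM; have [uU1 uU2 ME spR pe] := spec hM.
set U := spectralmx M in uU1 uU2 ME pe *; set sp := spectral_diag M in ME spR pe *.
rewrite (perm_big _ pe) big_map big_enum /=.
rewrite (shift_diag (cR r) uU2 ME) /optQ -/U -/sp.
rewrite -!mulmxA mxtrace_mulC -!mulmxA [U *m (U ^t* *m _)]mulmxA uU1 mul1mx.
rewrite mulmx1.
rewrite tr_diag_mul re_sum; apply: eq_bigr => i _.
rewrite !mxE eqxx mulr1n spR -cRB mulrC re_cRM re_cR.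
rewrite re_cR; case: ltP => h.
  by rewrite mul1r (max_idPl _) // subr_ge0 ltW.
by rewrite mul0r (max_idPr _) // subr_le0.
Qed.

Lemma compress_tr p q (B : 'M[C]_p) (P : 'M[C]_(q, p)) (Q : 'M[C]_q) (s : C) :
  P *m P ^t* = 1%:M ->
  \tr ((P *m B *m P ^t* - s%:M) *m Q) = \tr ((B - s%:M) *m (P ^t* *m Q *m P)).
Proof.
move=> PP; rewrite !mulmxBl !mul_scalar_mx !raddfB /= !mxtraceZ.
congr (_ - _).
  by rewrite -!mulmxA mxtrace_mulC -!mulmxA.
by rewrite [in RHS]mxtrace_mulC mulmxA PP mul1mx.
Qed.

Lemma compress_quad p q (P : 'M[C]_(q, p)) (Q : 'M[C]_q) (v : 'rV[C]_p) :
  v *m (P ^t* *m Q *m P) *m v ^t* = (v *m P ^t*) *m Q *m (v *m P ^t*) ^t*.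
Proof. by rewrite ct_mul trmxCK !mulmxA. Qed.

Lemma combine p (B : 'M[C]_p) (I : finType) (S : {set I}) (d : I -> nat)
  (P : forall l, 'M[C]_(d l, p)) (c : nat) r :
  is_hermitian B -> (forall l, l \in S -> is_hermitian (P l *m B *m (P l) ^t*)) ->
  (forall l, l \in S -> P l *m (P l) ^t* = 1%:M) ->
  \sum_(l in S) (P l) ^t* *m P l = (c%:R : C)%:M ->
  \sum_(l in S) \sum_(z <- eigs (P l *m B *m (P l) ^t*)) pos r (re z)
    <= c%:R * \sum_(z <- eigs B) pos r (re z).
Proof.
move=> hB hPB hP hsum.
rewrite (eq_bigr (fun l => re (\tr ((B - (cR r)%:M) *m
   ((P l) ^t* *m optQ (P l *m B *m (P l) ^t*) r *m P l))))); last first.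
  by move=> l lS; rewrite -compress_tr ?hP // optQ_tr //; apply: hPB.
rewrite -re_sum -raddf_sum /= -mulmx_sumr.
apply: trace_bound => // v.
rewrite mulmx_sumr mulmx_suml summxE re_sum.
have hb : forall l, l \in S ->
  0 <= re ((v *m ((P l) ^t* *m optQ (P l *m B *m (P l) ^t*) r *m P l) *m v ^t*) 0 0)
    <= re ((v *m ((P l) ^t* *m P l) *m v ^t*) 0 0).
  move=> l lS; rewrite compress_quad.
  have -> : v *m ((P l) ^t* *m P l) *m v ^t* = v *m ((P l) ^t* *m 1%:M *m P l) *m v ^t*.
    by rewrite mulmx1.
  by rewrite compress_quad mulmx1; apply: optQ_bound.
apply/andP; split.
  by apply: sumr_ge0 => l lS; have /andP [] := hb l lS.
apply: (@le_trans _ _ (\sum_(l in S) re ((v *m ((P l) ^t* *m P l) *m v ^t*) 0 0))).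
  by apply: ler_sum => l lS; have /andP [] := hb l lS.
rewrite -re_sum -summxE -mulmx_suml -mulmx_sumr hsum mul_mx_scalar -scalemxAl mxE.
by rewrite cR_nat re_cRM.
Qed.

Lemma combine_tr p (B : 'M[C]_p) (I : finType) (S : {set I}) (d : I -> nat)
  (P : forall l, 'M[C]_(d l, p)) (c : nat) :
  is_hermitian B -> (forall l, l \in S -> is_hermitian (P l *m B *m (P l) ^t*)) ->
  \sum_(l in S) (P l) ^t* *m P l = (c%:R : C)%:M ->
  \sum_(l in S) \sum_(z <- eigs (P l *m B *m (P l) ^t*)) re z
    = c%:R * \sum_(z <- eigs B) re z.
Proof.
move=> hB hPB hsum.
rewrite (eq_bigr (fun l => re (\tr (B *m ((P l) ^t* *m P l))))); last first.
  move=> l lS; rewrite sum_eigs_tr; last by apply: hPB.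
  by rewrite -mulmxA mxtrace_mulC -mulmxA.
rewrite (sum_eigs_tr hB) -re_sum -raddf_sum /= -mulmx_sumr hsum mul_mx_scalar mxtraceZ.
by rewrite cR_nat re_cRM.
Qed.
End Core.

Section Sel.
Variable R : rcfType.
Local Notation C := (R[i]).
Local Notation re := (@complex.Re R).
Variable n : nat.

Definition sel (K J : {set 'I_n}) : 'M[C]_(#|K|, #|J|) :=
  \matrix_(i, j) ((enum_val i == enum_val j)%:R).

Lemma sum_ind (K : {set 'I_n}) (a : 'I_n) (g : 'I_n -> C) :
  \sum_(y in K) (y == a)%:R * g y = (a \in K)%:R * g a.
Proof.
case aK: (a \in K).
  rewrite (bigD1 a) //= eqxx mul1r big1 ?addr0 ?mul1r // => y /andP [_ ne].
  by rewrite (negPf ne) mul0r.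
rewrite mul0r big1 // => y yK.
have ne : y != a by apply: contraFneq aK => <-.
by rewrite (negPf ne) mul0r.
Qed.

Lemma sumJ (J : {set 'I_n}) (h : 'I_n -> C) :
  \sum_(j < #|J|) h (enum_val j) = \sum_(y in J) h y.
Proof. by rewrite (big_enum_val (A := mem J)). Qed.

Lemma psub_herm (A : 'M[C]_n) (J : {set 'I_n}) : is_hermitian A -> is_hermitian (psubmx A J).
Proof. by move=> hA i j; rewrite !mxE hA. Qed.

Lemma sel_psub (A : 'M[C]_n) (K J : {set 'I_n}) : K \subset J ->
  sel K J *m psubmx A J *m (sel K J) ^t* = psubmx A K.
Proof.
move=> KJ; apply/matrixP => i i'; rewrite !mxE.
have inJ : forall x, x \in K -> x \in J by move=> x; apply: (subsetP KJ).
rewrite (eq_bigr (fun j' => (enum_val j' == enum_val i')%:R * A (enum_val i) (enum_val j'))).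
  rewrite (sumJ J (fun y => (y == enum_val i')%:R * A (enum_val i) y)) sum_ind.
  by rewrite inJ ?enum_valP // mul1r.
move=> j' _; rewrite !mxE conjC_nat eq_sym mulrC; congr (_ * _).
rewrite (eq_bigr (fun j => (enum_val j == enum_val i)%:R * A (enum_val j) (enum_val j'))).
  rewrite (sumJ J (fun y => (y == enum_val i)%:R * A y (enum_val j'))) sum_ind.
  by rewrite inJ ?enum_valP // mul1r.
by move=> j _; rewrite !mxE eq_sym.
Qed.

Lemma sel_unit (K J : {set 'I_n}) : K \subset J -> sel K J *m (sel K J) ^t* = 1%:M.
Proof.
move=> KJ; apply/matrixP => i i'; rewrite !mxE.
rewrite (eq_bigr (fun j => (enum_val j == enum_val i)%:R * (enum_val j == enum_val i')%:R)).
  rewrite (sumJ J (fun y => (y == enum_val i)%:R * (y == enum_val i')%:R)) sum_ind.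
  rewrite (subsetP KJ) ?enum_valP // mul1r (inj_eq enum_val_inj).
  by case: (i == i').
by move=> j _; rewrite !mxE conjC_nat [enum_val i == _]eq_sym [enum_val i' == _]eq_sym.
Qed.

Lemma sel_sum (J : {set 'I_n}) (k : nat) : (1 <= k)%N ->
  \sum_(K in [set K : {set 'I_n} | K \subset J & #|K| == k]) (sel K J) ^t* *m sel K J
    = (('C(#|J|.-1, k.-1))%:R : C)%:M.
Proof.
move=> k1; apply/matrixP => j j'; rewrite summxE !mxE.
rewrite (eq_bigr (fun K : {set 'I_n} => ((enum_val j \in K)%:R : C) * (enum_val j == enum_val j')%:R)).

  rewrite -mulr_suml (inj_eq enum_val_inj).
  rewrite (bigID (fun K : {set 'I_n} => enum_val j \in K)) /= [X in _ + X]big1; last first.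
    by move=> K /andP [_ /negPf ->].
  rewrite addr0 (eq_bigr (fun _ => 1)); last by move=> K /andP [_ ->].
  rewrite (eq_bigl (fun K => K \in [set K : {set 'I_n} | [&& K \subset J, #|K| == k & enum_val j \in K]])); last first.
    by move=> K; rewrite !inE andbA.
  rewrite sumr_const.
  rewrite count_contain ?enum_valP //.
  by case: (j == j'); rewrite ?mulr1 ?mulr0 // mulr1n.
move=> K _; rewrite !mxE.
rewrite (eq_bigr (fun i => (enum_val i == enum_val j)%:R * (enum_val i == enum_val j')%:R)).
  by rewrite (sumJ K (fun y => (y == enum_val j)%:R * (y == enum_val j')%:R)) sum_ind.
by move=> i _; rewrite !mxE conjC_nat.
Qed.

End Sel.

Lemma sum_rep (R : realDomainType) c (s : seq R) (g : R -> R) :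
  \sum_(a <- rep c s) g a = (\sum_(a <- s) g a) *+ c.
Proof.
elim: c => [|c IH]; first by rewrite /rep /= big_nil.
by rewrite /rep /= big_cat -/(rep c s) IH mulrS.
Qed.

Section Main.
Variable R : rcfType.
Local Notation C := (R[i]).
Local Notation re := (@complex.Re R).
Variable n : nat.
Variable A : 'M[C]_n.
Hypothesis hA : is_hermitian A.

Definition G (g : R -> R) (K : {set 'I_n}) := \sum_(z <- eigs (psubmx A K)) g (re z).

Lemma sum_Xm m (g : R -> R) : \sum_(a <- Xm A m) g a =
  \sum_(J in [set J : {set 'I_n} | #|J| == m]) G g J.
Proof.
rewrite /Xm big_flatten big_map big_enum /=; apply: eq_bigr => J _.
by rewrite big_map.
Qed.

Lemma dcount (H : {set 'I_n} -> R) k m : (k <= m)%N ->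
  \sum_(J in [set J : {set 'I_n} | #|J| == m])
     \sum_(K in [set K : {set 'I_n} | K \subset J & #|K| == k]) H K =
  (\sum_(K in [set K : {set 'I_n} | #|K| == k]) H K) *+ 'C(n - k, m - k).
Proof.
move=> km.
rewrite (eq_bigr (fun J : {set 'I_n} => \sum_(K | (K \in [set K : {set 'I_n} | #|K| == k]) && (K \subset J)) H K)); last first.
  move=> J _; apply: eq_bigl => K; by rewrite !inE andbC.
rewrite (exchange_big_dep (fun K => K \in [set K : {set 'I_n} | #|K| == k])) /=; last by move=> J K _ /andP [].
rewrite -sumrMnl; apply: eq_bigr => K KS.
rewrite (eq_bigl (fun J => J \in [set J : {set 'I_n} | (#|J| == m) && (K \subset J)])); last first.
  by move=> J; move: (KS); rewrite !inE => ->.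
move: KS; rewrite inE => /eqP cK.
by rewrite sumr_const count_super cK ?card_ord // cK.
Qed.

Lemma perJ_pos (J : {set 'I_n}) k r : (1 <= k)%N ->
  \sum_(K in [set K : {set 'I_n} | K \subset J & #|K| == k]) G (fun a => Num.max (a - r) 0) K
   <= ('C(#|J|.-1, k.-1))%:R * G (fun a => Num.max (a - r) 0) J.
Proof.
move=> k1.
rewrite (eq_bigr (fun K => \sum_(z <- eigs (@sel R n K J *m psubmx A J *m (@sel R n K J) ^t*)) Num.max (re z - r) 0)); last first.
  by move=> K; rewrite inE => /andP [KJ _]; rewrite sel_psub.
rewrite /G; have := (@combine R #|J| (psubmx A J) _ [set K : {set 'I_n} | K \subset J & #|K| == k] (fun K => #|K|) (fun K => @sel R n K J) 'C(#|J|.-1, k.-1) r). apply.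
- exact: psub_herm.
- by move=> K; rewrite inE => /andP [KJ _]; rewrite sel_psub //; apply: psub_herm.
- by move=> K; rewrite inE => /andP [KJ _]; rewrite sel_unit.
- exact: sel_sum.
Qed.

Lemma perJ_id (J : {set 'I_n}) k : (1 <= k)%N ->
  \sum_(K in [set K : {set 'I_n} | K \subset J & #|K| == k]) G (fun a => a) K
   = ('C(#|J|.-1, k.-1))%:R * G (fun a => a) J.
Proof.
move=> k1.
rewrite (eq_bigr (fun K => \sum_(z <- eigs (@sel R n K J *m psubmx A J *m (@sel R n K J) ^t*)) re z)); last first.
  by move=> K; rewrite inE => /andP [KJ _]; rewrite sel_psub.
rewrite /G; apply: (@combine_tr R #|J| (psubmx A J) _ [set K : {set 'I_n} | K \subset J & #|K| == k] (fun K => #|K|) (fun K => @sel R n K J)).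
- exact: psub_herm.
- by move=> K; rewrite inE => /andP [KJ _]; rewrite sel_psub //; apply: psub_herm.
- exact: sel_sum.
Qed.

Lemma G_one (K : {set 'I_n}) : G (fun _ => 1) K = #|K|%:R.
Proof. by rewrite /G sum_const_seq size_eigs. Qed.

Lemma perJ_one (J : {set 'I_n}) k : (1 <= k)%N ->
  \sum_(K in [set K : {set 'I_n} | K \subset J & #|K| == k]) G (fun _ => 1) K
   = ('C(#|J|.-1, k.-1))%:R * G (fun _ => 1) J.
Proof.
move=> k1.
rewrite (eq_bigr (fun _ => k%:R)); last by move=> K; rewrite inE G_one => /andP [_ /eqP ->].
have e : (k * 'C(#|J|, k) = 'C(#|J|.-1, k.-1) * #|J|)%N.
  by have := mul_bin_diag #|J| k.-1; rewrite prednK // mulnC => ->.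
by rewrite sumr_const cards_draws G_one -[k%:R *+ _]mulr_natr -!natrM e.
Qed.
End Main.

Theorem theorem4p1 (R : rcfType) (n : nat) (A : 'M[R[i]]_n) :
  is_hermitian A ->
  forall k m : nat, (1 <= k)%N -> (k <= m)%N -> (m <= n)%N ->
  majorizes (rep 'C(m.-1, k.-1) (Xm A m)) (rep 'C(n - k, m - k) (Xm A k)).
Proof.
move=> hA k m k1 km mn.
have hX g : \sum_(a <- rep 'C(m.-1, k.-1) (Xm A m)) g a =
    (\sum_(J in [set J : {set 'I_n} | #|J| == m]) G A g J) *+ 'C(m.-1, k.-1).
  by rewrite sum_rep sum_Xm.
have hY g : \sum_(a <- rep 'C(n - k, m - k) (Xm A k)) g a =
    \sum_(J in [set J : {set 'I_n} | #|J| == m])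
      \sum_(K in [set K : {set 'I_n} | K \subset J & #|K| == k]) G A g K.
  by rewrite sum_rep sum_Xm dcount.
apply: majorizes_of.
- have sz (s : seq R) : (size s)%:R = \sum_(a <- s) (1 : R) by rewrite sum_const_seq.
  apply/eqP; rewrite -(eqr_nat R) !sz hX hY -sumrMnl; apply/eqP.
  apply: eq_bigr => J; rewrite inE => /eqP hJ.
  by rewrite perJ_one // hJ mulr_natl.
- rewrite hX hY -sumrMnl; apply: eq_bigr => J; rewrite inE => /eqP hJ.
  by rewrite perJ_id // hJ mulr_natl.
- move=> r; rewrite hX hY -sumrMnl; apply: ler_sum => J; rewrite inE => /eqP hJ.
  by rewrite -hJ -mulr_natl; apply: perJ_pos.
Qed.
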